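(* Let $T$ be a rooted binary tree with black/white-coloured leaves and the induced node colouring and classification as described in the context. No SPR operation on $T$ belonging to the class $(\mathrm{W},\mathrm{r},\mathrm{B},\mathrm{b})$ produces a compatible tree.
   Context: All trees are rooted binary trees; every non-leaf node has exactly two children and every non-root node $n$ has a parent $\mathrm{pa}(n)$. A ''subtree'' always means a node together with all of its descendants. Colouring: each leaf is coloured black (B) or white (W); an internal node is black if both children are black, white if both children are white, and grey (G) otherwise. A subtree is black (resp. white) if all its nodes are black (resp. white); it is maximal if no strictly larger subtree containing it is black (resp. white). Classification: a black or white node is of type ''r'' if it is the root of a maximal subtree of its own colour, and of type ''b'' otherwise; all grey nodes are of type ''b'' by convention. A tree is compatible if it contains at most one maximal black subtree. SPR operation $(u,v)$ on $T$: $u$ is a non-root node, $v$ is a node with $v\notin\{u,\mathrm{pa}(u)\}$ and $v$ not a descendant of $u$; the subtree rooted at $u$ is pruned (the edge to $u$ is removed and $\mathrm{pa}(u)$ deleted, its other child taking its place), then regrafted by inserting a new node on the edge from $v$ to its parent (or as a new root above $v$ if $v$ is the root) whose two children are $v$ and $u$; colours of the resulting tree are recomputed by the same rule. The operation belongs to class $(x,y,z,w)$ where $x,z\in\{\mathrm{B},\mathrm{W},\mathrm{G}\}$ are the colours in $T$ of $u$ and $v$, and $y,w\in\{\mathrm{r},\mathrm{b}\}$ their classifications in $T$. *)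

(* Defs.v *)
From Stdlib Require Import List Bool.
Import ListNotations.

Inductive lcol := Black | White.

Inductive col := B | W | G.

Inductive tree := Leaf (c : lcol) | Node (l r : tree).

Fixpoint colour (t : tree) : col :=
  match t with
  | Leaf Black => B
  | Leaf White => W
  | Node l r =>
      match colour l, colour r with
      | B, B => B
      | W, W => W
      | _, _ => G
      end
  end.

(* A node of t is addressed by its path from the root (false = left child,
   true = right child). [sub t p] is the subtree rooted at node p, if any. *)
Fixpoint sub (t : tree) (p : list bool) : option tree :=
  match p with
  | [] => Some t
  | b :: p' =>
      match t with
      | Leaf _ => None
      | Node l r => sub (if b then r else l) p'
      end
  end.

Definition is_node (t : tree) (p : list bool) : Prop := sub t p <> None.

Definition node_col (t : tree) (p : list bool) (c : col) : Prop :=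
  exists s, sub t p = Some s /\ colour s = c.

(* Node p is of type "r": it is black or white, and no strictly larger subtree
   containing the subtree at p (i.e. a subtree rooted at a proper ancestor)
   has that colour, i.e. p is the root of a maximal subtree of its colour. *)
Definition type_r (t : tree) (p : list bool) : Prop :=
  exists c, c <> G /\ node_col t p c /\
    forall q w, p = q ++ w -> w <> [] -> ~ node_col t q c.

Definition max_black_root (t : tree) (p : list bool) : Prop :=
  node_col t p B /\ forall q w, p = q ++ w -> w <> [] -> ~ node_col t q B.

Definition compatible (t : tree) : Prop :=
  forall p q, max_black_root t p -> max_black_root t q -> p = q.

Definition subd (t : tree) (p : list bool) : tree :=
  match sub t p with Some s => s | None => t end.

Fixpoint replace (t : tree) (p : list bool) (s : tree) : tree :=
  match p with
  | [] => s
  | b :: p' =>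
      match t with
      | Leaf _ => t
      | Node l r => if b then Node l (replace r p' s) else Node (replace l p' s) r
      end
  end.

Fixpoint strip_prefix (q v : list bool) : option (list bool) :=
  match q, v with
  | [], _ => Some v
  | a :: q', b :: v' => if Bool.eqb a b then strip_prefix q' v' else None
  | _ :: _, [] => None
  end.

Definition parent (u : list bool) : list bool := removelast u.

Definition valid_spr (t : tree) (u v : list bool) : Prop :=
  is_node t u /\ u <> [] /\ is_node t v /\ v <> u /\ v <> parent u /\
  ~ (exists w, v = u ++ w).

(* The SPR operation (u, v): prune the subtree at u (its parent is deleted and
   its sibling takes the parent's place), then regraft it by inserting a new
   node on the edge above v (or a new root above v), with children v and u.
   [v'] is the address of the node v in the pruned tree. *)
Definition spr (t : tree) (u v : list bool) : tree :=
  let q := parent u in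
  let b := last u false in
  let su := subd t u in
  let sibp := q ++ [negb b] in
  let t' := replace t q (subd t sibp) in
  let v' := match strip_prefix sibp v with Some w => q ++ w | None => v end in
  replace t' v' (Node (subd t' v') su).

(* Main.v *)
Require Import Defs.
From Stdlib Require Import List.
From Stdlib Require Import Bool Classical.
Import ListNotations.

Lemma sub_nil t : sub t [] = Some t.
Proof. destruct t; reflexivity. Qed.

Lemma sub_app t p w :
  sub t (p ++ w) = match sub t p with Some s => sub s w | None => None end.
Proof.
  revert t; induction p as [|x p IH]; intros t; [destruct t; reflexivity|].
  destruct t; simpl; auto.
Qed.

Lemma col_desc w : forall s s' c, colour s = c -> c <> G -> sub s w = Some s' -> colour s' = c.
Proof.
  induction w as [|x w IH]; intros s s' c Hc HG H; simpl in H.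
  - rewrite sub_nil in H. injection H; intros; subst; auto.
  - destruct s as [k|l r]; [discriminate|].
    assert (colour l = c /\ colour r = c) as [H1 H2].
    { simpl in Hc. destruct (colour l), (colour r), c; try discriminate;
      try (exfalso; now apply HG); split; reflexivity. }
    destruct x; simpl in H; [exact (IH _ _ _ H2 HG H)|exact (IH _ _ _ H1 HG H)].
Qed.

Lemma mbr T r x s s0 : sub T (r ++ [x]) = Some s -> colour s = B ->
  sub T r = Some s0 -> colour s0 <> B -> max_black_root T (r ++ [x]).
Proof.
  intros H1 H2 H3 H4. split. { exists s; auto. }
  intros q w Heq Hw [s1 [Hs1 Hc1]].
  destruct (exists_last Hw) as [w' [y Hy]]. subst w.
  rewrite app_assoc in Heq. apply app_inj_tail in Heq. destruct Heq as [Hr _]. subst r.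
  rewrite sub_app, Hs1 in H3. apply H4. eapply col_desc; eauto. discriminate.
Qed.

Lemma parent_G T r x s : sub T (r ++ [x]) = Some s -> colour s = G ->
  exists s0, sub T r = Some s0 /\ colour s0 = G.
Proof.
  rewrite sub_app. destruct (sub T r) as [s0|]; [|discriminate]. intros H Hc.
  exists s0. split; auto.
  destruct s0 as [c|l rr]; simpl in H; [discriminate|].
  destruct x; rewrite sub_nil in H; injection H; intros E; rewrite E; simpl; rewrite Hc.
  - destruct (colour l); reflexivity.
  - destruct (colour rr); reflexivity.
Qed.

Lemma replace_in q : forall t s w, sub t q <> None -> sub (replace t q s) (q ++ w) = sub s w.
Proof.
  induction q as [|x q IH]; intros t s w H; [destruct t; reflexivity|].
  destruct t as [c|l r]; [simpl in H; congruence|].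
  destruct x; simpl; apply IH; auto.
Qed.

Lemma replace_disj q : forall t s p, (forall z, p <> q ++ z) -> (forall z, q <> p ++ z) ->
  sub (replace t q s) p = sub t p.
Proof.
  induction q as [|x q IH]; intros t s p D1 D2.
  - exfalso; apply (D1 p); reflexivity.
  - destruct p as [|y p]. { exfalso; apply (D2 (x :: q)); reflexivity. }
    destruct t as [c|l r]; simpl; auto.
    destruct x, y; simpl; auto; apply IH; intros z E;
      solve [apply (D1 z); simpl; congruence | apply (D2 z); simpl; congruence].
Qed.

Lemma strip_app q w : strip_prefix q (q ++ w) = Some w.
Proof. induction q as [|a q IH]; simpl; auto. rewrite eqb_reflx; auto. Qed.

Lemma strip_some q : forall v w, strip_prefix q v = Some w -> v = q ++ w.
Proof.
  induction q as [|a q IH]; intros v w H; simpl in H.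
  - injection H; intros; subst; reflexivity.
  - destruct v as [|b v]; [discriminate|].
    destruct (Bool.eqb a b) eqn:E; [|discriminate].
    apply eqb_prop in E; subst. simpl; f_equal; apply IH; auto.
Qed.


Theorem lemma3 (t : tree) (u v : list bool) :
  valid_spr t u v ->
  node_col t u W -> type_r t u ->
  node_col t v B -> ~ type_r t v ->
  ~ compatible (spr t u v).
Proof.
  intros [Hu [Hune [Hv _]]] [U0 [HU0 HcU]] _ [V0 [HV0 HcV]] Hnr Hcomp.
  assert (exists a w, v = a ++ w /\ w <> [] /\ node_col t a B)
    as [a [w [Hvw [Hw [A0 [HA0 HcA]]]]]].
  { apply NNPP. intro Hn. apply Hnr. exists B. split; [discriminate|].
    split; [exists V0; auto|]. intros q w Hq Hw' Hq'. apply Hn. exists q, w. auto. }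
  destruct (exists_last Hw) as [w' [bv Hw']]. subst w.
  set (P := a ++ w').
  assert (HvP : v = P ++ [bv]) by (subst P; rewrite Hvw, app_assoc; reflexivity).
  destruct (exists_last Hune) as [qu [b Hub]]. subst u.
  assert (Hblack : forall y s, sub t (a ++ y) = Some s -> colour s = B).
  { intros y s H. rewrite sub_app, HA0 in H. eapply col_desc; eauto. discriminate. }
  assert (Hnot : forall p y z, p = a ++ y -> p = (qu ++ [b]) ++ z -> False).
  { intros p y z H1 H2. rewrite H1 in H2. apply app_eq_app in H2.
    destruct H2 as [l [[E1 E2]|[E1 E2]]].
    - rewrite E1, sub_app, HU0 in HA0.
      assert (colour A0 = W) by (eapply col_desc; eauto; discriminate). congruence.
    - rewrite E1 in HU0. apply Hblack in HU0. congruence. }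
  set (sib := qu ++ [negb b]).
  assert (Hreg : forall p y, p = a ++ y ->
     (exists rest, p = sib ++ rest) \/ ((forall z, p <> qu ++ z) /\ (forall z, qu <> p ++ z))).
  { intros p y Hp.
    destruct (classic (exists rest, p = sib ++ rest)) as [H|H]; [left; auto|right; split].
    - intros z Hz. destruct z as [|c z].
      + rewrite app_nil_r in Hz.
        apply (Hnot (qu ++ [b]) (y ++ [b]) []); [|rewrite app_nil_r; reflexivity].
        rewrite <- Hz, Hp, app_assoc. reflexivity.
      + destruct (bool_dec c b) as [Ec|Ec].
        * subst c. apply (Hnot p y z Hp). rewrite Hz, <- app_assoc. reflexivity.
        * apply H. exists z. rewrite Hz. subst sib. rewrite <- app_assoc. simpl.
          assert (c = negb b) by (destruct c, b; simpl; congruence). subst c. reflexivity.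
    - intros z Hz. apply (Hnot (qu ++ [b]) (y ++ z ++ [b]) []).
      + rewrite Hz, Hp, !app_assoc. reflexivity.
      + rewrite app_nil_r. reflexivity. }
  assert (Hnone : forall p, (forall z, p <> qu ++ z) -> strip_prefix sib p = None).
  { intros p D. destruct (strip_prefix sib p) eqn:E; auto.
    exfalso. apply strip_some in E. apply (D ([negb b] ++ l)). rewrite E.
    subst sib. rewrite app_assoc. reflexivity. }
  assert (Hqu : sub t qu <> None).
  { intro E. apply Hu. rewrite sub_app, E. reflexivity. }
  set (m := fun p => match strip_prefix sib p with Some w => qu ++ w | None => p end).
  set (t' := replace t qu (subd t sib)).
  assert (Hm : forall p y x, p = a ++ y -> sub t p = Some x -> sub t' (m p) = Some x).
  { intros p y x Hp Hx. destruct (Hreg p y Hp) as [[rest Hrest]|[D1 D2]].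
    - subst m t'. simpl. rewrite Hrest, strip_app, replace_in by auto.
      rewrite Hrest, sub_app in Hx. destruct (sub t sib) as [s0|] eqn:Es; [|discriminate].
      unfold subd. rewrite Es. auto.
    - subst m t'. simpl. rewrite Hnone by auto. rewrite replace_disj; auto. }
  assert (Hmstep : forall c, m (P ++ [c]) = m P ++ [c]).
  { intros c. destruct (Hreg P w' eq_refl) as [[rest Hrest]|[D1 D2]].
    - assert (E : P ++ [c] = sib ++ (rest ++ [c])) by (rewrite Hrest, app_assoc; reflexivity).
      subst m. simpl. rewrite E, Hrest, !strip_app, app_assoc. reflexivity.
    - subst m. simpl. rewrite (Hnone P D1).
      rewrite Hnone; auto.
      intros z Ez. destruct (Hreg (P ++ [c]) (w' ++ [c])) as [[rest Hrest]|[D3 D4]].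
      + subst P. rewrite app_assoc. reflexivity.
      + destruct rest as [|x l].
        * rewrite app_nil_r in Hrest. subst sib. apply app_inj_tail in Hrest.
          destruct Hrest as [E _]. apply (D1 []). rewrite app_nil_r. auto.
        * assert (Hl : x :: l <> []) by discriminate.
          destruct (exists_last Hl) as [l' [y Hy]]. rewrite Hy, app_assoc in Hrest.
          apply app_inj_tail in Hrest. destruct Hrest as [E _].
          apply (D1 ([negb b] ++ l')). rewrite E. subst sib. rewrite app_assoc. reflexivity.
      + exact (D3 z Ez). }
  assert (HP : exists NP, sub t P = Some NP /\ sub NP [bv] = Some V0).
  { rewrite HvP, sub_app in HV0. destruct (sub t P); [eauto|discriminate]. }
  destruct HP as [NP [HNP HNPv]].
  assert (HS : exists S0, sub t (P ++ [negb bv]) = Some S0).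
  { rewrite sub_app, HNP. destruct NP as [k|l r]; [discriminate|].
    destruct bv; simpl; rewrite sub_nil; eauto. }
  destruct HS as [S0 HS0].
  assert (HcS : colour S0 = B).
  { apply (Hblack (w' ++ [negb bv])). rewrite app_assoc. exact HS0. }
  set (P' := m P).
  assert (Ht'v : sub t' (P' ++ [bv]) = Some V0).
  { subst P'. rewrite <- Hmstep. apply (Hm _ (w' ++ [bv])).
    - subst P. rewrite app_assoc. reflexivity.
    - rewrite <- HvP. exact HV0. }
  assert (Ht's : sub t' (P' ++ [negb bv]) = Some S0).
  { subst P'. rewrite <- Hmstep. apply (Hm _ (w' ++ [negb bv])).
    - subst P. rewrite app_assoc. reflexivity.
    - exact HS0. }
  unfold spr, parent in Hcomp. rewrite removelast_last, last_last in Hcomp.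
  cbv zeta in Hcomp.
  change (replace t qu (subd t (qu ++ [negb b]))) with t' in Hcomp.
  change (match strip_prefix (qu ++ [negb b]) v with Some w => qu ++ w | None => v end)
    with (m v) in Hcomp.
  rewrite HvP, Hmstep in Hcomp. fold P' in Hcomp.
  assert (E1 : subd t' (P' ++ [bv]) = V0) by (unfold subd; rewrite Ht'v; reflexivity).
  assert (E2 : subd t (qu ++ [b]) = U0) by (unfold subd; rewrite HU0; reflexivity).
  rewrite E1, E2 in Hcomp.
  set (T := replace t' (P' ++ [bv]) (Node V0 U0)) in Hcomp.
  assert (Hnn : sub t' (P' ++ [bv]) <> None) by congruence.
  assert (T1 : sub T (P' ++ [bv]) = Some (Node V0 U0)).
  { subst T. rewrite <- (app_nil_r (P' ++ [bv])) at 2. rewrite replace_in by auto.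
    apply sub_nil. }
  assert (T2 : sub T ((P' ++ [bv]) ++ [false]) = Some V0).
  { subst T. rewrite replace_in by auto. simpl. apply sub_nil. }
  assert (T3 : sub T (P' ++ [negb bv]) = Some S0).
  { subst T. rewrite replace_disj; auto.
    - intros z Ez. rewrite <- app_assoc in Ez. apply app_inv_head in Ez.
      simpl in Ez. injection Ez. destruct bv; discriminate.
    - intros z Ez. rewrite <- app_assoc in Ez. apply app_inv_head in Ez.
      simpl in Ez. injection Ez. destruct bv; discriminate. }
  assert (HcN : colour (Node V0 U0) = G) by (simpl; rewrite HcV, HcU; reflexivity).
  destruct (parent_G T P' bv _ T1 HcN) as [s0 [Hs0 Hcs0]].
  assert (M1 : max_black_root T ((P' ++ [bv]) ++ [false])).
  { eapply mbr; eauto. rewrite HcN. discriminate. }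
  assert (M2 : max_black_root T (P' ++ [negb bv])).
  { eapply mbr; eauto. rewrite Hcs0. discriminate. }
  specialize (Hcomp _ _ M1 M2). rewrite <- app_assoc in Hcomp.
  apply app_inv_head in Hcomp. discriminate.
Qed.
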